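(* Let $S=\{(e^{it},0)\in\mathbb{C}^2:t\in\mathbb{R}\}$ and let $U=\{z\in\mathbb{C}^2:\operatorname{dist}(z,S)<1/10\}$ be its open $1/10$-tubular neighborhood, and let $p=(9/10,0)\in\partial U$. Then there is no holomorphic automorphism $\psi\in\operatorname{Aut}(\mathbb{C}^2)$ such that $\psi(p)$ is a spherically-extreme boundary point of $\psi(U)$.
   Context: A boundary point $p\in\partial\Omega$ of a domain $\Omega\subset\mathbb{C}^n$ is called spherically-extreme if (1) $\partial\Omega$ is $\mathcal{C}^2$-smooth in an open neighborhood of $p$, and (2) there is a Euclidean ball $\mathbb{B}^n(c;R)=\{z:\|z-c\|<R\}$ with $\Omega\subset\mathbb{B}^n(c;R)$ and $p\in\partial\Omega\cap\partial\mathbb{B}^n(c;R)$. $\operatorname{Aut}(\mathbb{C}^2)$ denotes the group of biholomorphic self-maps of $\mathbb{C}^2$. *)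

(* Defs.v *)
From Stdlib Require Import Reals Lra Lia.
Open Scope R_scope.

(* A point (z1, z2) of C^2 with z1 = a1 + i b1, z2 = a2 + i b2. *)
Record C2 := mkC2 { a1 : R; b1 : R; a2 : R; b2 : R }.

Definition addC2 (z w : C2) : C2 :=
  mkC2 (a1 z + a1 w) (b1 z + b1 w) (a2 z + a2 w) (b2 z + b2 w).
Definition subC2 (z w : C2) : C2 :=
  mkC2 (a1 z - a1 w) (b1 z - b1 w) (a2 z - a2 w) (b2 z - b2 w).
Definition scaleC2 (r : R) (z : C2) : C2 :=
  mkC2 (r * a1 z) (r * b1 z) (r * a2 z) (r * b2 z).
Definition mulI (z : C2) : C2 := mkC2 (- b1 z) (a1 z) (- b2 z) (a2 z).

Definition normC2 (z : C2) : R :=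
  sqrt (a1 z ^ 2 + b1 z ^ 2 + a2 z ^ 2 + b2 z ^ 2).
Definition distC2 (z w : C2) : R := normC2 (subC2 z w).

Definition basis (k : nat) : C2 :=
  match k with
  | 0%nat => mkC2 1 0 0 0
  | 1%nat => mkC2 0 1 0 0
  | 2%nat => mkC2 0 0 1 0
  | 3%nat => mkC2 0 0 0 1
  | _ => mkC2 0 0 0 0
  end.

Definition C_linear (L : C2 -> C2) : Prop :=
  (forall x y, L (addC2 x y) = addC2 (L x) (L y)) /\
  (forall r x, L (scaleC2 r x) = scaleC2 r (L x)) /\
  (forall x, L (mulI x) = mulI (L x)).

Definition frechet_at (F : C2 -> C2) (z : C2) (L : C2 -> C2) : Prop :=
  forall eps, 0 < eps -> exists delta, 0 < delta /\
    forall h, 0 < normC2 h < delta ->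
      normC2 (subC2 (subC2 (F (addC2 z h)) (F z)) (L h)) <= eps * normC2 h.

Definition holomorphic (F : C2 -> C2) : Prop :=
  forall z, exists L, C_linear L /\ frechet_at F z L.

Definition is_aut (psi : C2 -> C2) : Prop :=
  holomorphic psi /\
  exists phi, holomorphic phi /\ (forall z, phi (psi z) = z) /\
              (forall w, psi (phi w) = w).

Definition open_set (A : C2 -> Prop) : Prop :=
  forall z, A z -> exists r, 0 < r /\ forall w, distC2 w z < r -> A w.
Definition in_closure (A : C2 -> Prop) (z : C2) : Prop :=
  forall r, 0 < r -> exists w, A w /\ distC2 w z < r.
Definition in_interior (A : C2 -> Prop) (z : C2) : Prop :=
  exists r, 0 < r /\ forall w, distC2 w z < r -> A w.
Definition in_boundary (A : C2 -> Prop) (z : C2) : Prop :=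
  in_closure A z /\ ~ in_interior A z.

Definition image (psi : C2 -> C2) (A : C2 -> Prop) : C2 -> Prop :=
  fun w => exists z, A z /\ psi z = w.

Definition continuous_on (f : C2 -> R) (V : C2 -> Prop) : Prop :=
  forall z, V z -> forall eps, 0 < eps -> exists delta, 0 < delta /\
    forall w, distC2 w z < delta -> Rabs (f w - f z) < eps.

Definition C2_on (rho : C2 -> R) (d1 : nat -> C2 -> R)
    (d2 : nat -> nat -> C2 -> R) (V : C2 -> Prop) : Prop :=
  (forall k z, (k < 4)%nat -> V z ->
     derivable_pt_lim (fun t => rho (addC2 z (scaleC2 t (basis k)))) 0 (d1 k z)) /\
  (forall k j z, (k < 4)%nat -> (j < 4)%nat -> V z ->
     derivable_pt_lim (fun t => d1 k (addC2 z (scaleC2 t (basis j)))) 0 (d2 k j z)) /\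
  continuous_on rho V /\
  (forall k, (k < 4)%nat -> continuous_on (d1 k) V) /\
  (forall k j, (k < 4)%nat -> (j < 4)%nat -> continuous_on (d2 k j) V).

Definition C2_smooth_boundary_near (Omega : C2 -> Prop) (p : C2) : Prop :=
  exists (V : C2 -> Prop) rho d1 d2,
    open_set V /\ V p /\ C2_on rho d1 d2 V /\
    (forall z, V z -> exists k, (k < 4)%nat /\ d1 k z <> 0) /\
    (forall z, V z -> (Omega z <-> rho z < 0)).

Definition spherically_extreme (Omega : C2 -> Prop) (p : C2) : Prop :=
  in_boundary Omega p /\
  C2_smooth_boundary_near Omega p /\
  exists (c : C2) (Rad : R), 0 < Rad /\
    (forall z, Omega z -> distC2 z c < Rad) /\
    distC2 p c = Rad.

Definition circleS (s : C2) : Prop := exists t : R, s = mkC2 (cos t) (sin t) 0 0.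
(* U = {z : dist(z,S) < 1/10}; dist(z,S) < 1/10 iff some s in S has |z-s| < 1/10 *)
Definition tubeU (z : C2) : Prop := exists s, circleS s /\ distC2 z s < 1/10.
Definition pointP : C2 := mkC2 (9/10) 0 0 0.

(* Main.v *)
Require Import Defs.
From Stdlib Require Import Reals.
Open Scope R_scope.
From Stdlib Require Import Lra Lia ClassicalEpsilon.
From Coquelicot Require Import Coquelicot.


Definition ccont (G : Complex.C -> Complex.C) : Prop :=
  forall z eps, 0 < eps -> exists del, 0 < del /\
    forall z', Cmod (z' - z)%C < del -> Cmod (G z' - G z)%C < eps.

Definition cdiff (f : Complex.C -> Complex.C) (w c : Complex.C) : Prop :=
  forall eps, 0 < eps -> exists del, 0 < del /\
    forall h, Cmod h < del -> Cmod (f (w + h) - f w - c * h)%C <= eps * Cmod h.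

Definition entire (f : Complex.C -> Complex.C) : Prop := forall w, exists c, cdiff f w c.

Lemma sqrt_le_of (x y : R) : 0 <= y -> x <= y * y -> sqrt x <= y.
Proof.
  intros Hy Hx. destruct (Rle_or_lt 0 x) as [H0|H0].
  - rewrite <- (sqrt_square y Hy). apply sqrt_le_1_alt; lra.
  - rewrite sqrt_neg_0; lra.
Qed.

Lemma le_sqrt_of (x y : R) : 0 <= y -> y * y <= x -> y <= sqrt x.
Proof.
  intros Hy Hx. rewrite <- (sqrt_square y Hy). apply sqrt_le_1_alt; lra.
Qed.

Lemma Cmod_le_abs (u v : R) : Cmod (u, v) <= Rabs u + Rabs v.
Proof.
  unfold Cmod; simpl. apply sqrt_le_of.
  - pose proof (Rabs_pos u); pose proof (Rabs_pos v); lra.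
  - pose proof (Rabs_pos u); pose proof (Rabs_pos v).
    assert (u*u = Rabs u * Rabs u) by (rewrite <- Rabs_mult; rewrite Rabs_right; nra).
    assert (v*v = Rabs v * Rabs v) by (rewrite <- Rabs_mult; rewrite Rabs_right; nra).
    nra.
Qed.

Lemma abs_fst_le (z : Complex.C) : Rabs (fst z) <= Cmod z.
Proof. apply re_le_Cmod. Qed.

Lemma abs_snd_le (z : Complex.C) : Rabs (snd z) <= Cmod z.
Proof.
  destruct z as [u v]; unfold Cmod; simpl. apply le_sqrt_of. apply Rabs_pos.
  rewrite <- Rabs_mult. rewrite Rabs_right; nra.
Qed.

Lemma Cmod_sq (z : Complex.C) : Cmod z * Cmod z = fst z * fst z + snd z * snd z.
Proof. destruct z as [u v]; unfold Cmod; simpl. rewrite sqrt_sqrt; nra. Qed.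

Lemma cont_R (g : R -> R) x :
  (forall eps, 0 < eps -> exists del, 0 < del /\ forall x', Rabs (x' - x) < del -> Rabs (g x' - g x) < eps) ->
  continuous g x.
Proof.
  intros H. apply continuity_pt_filterlim.
  intros eps He. destruct (H eps He) as [d [Hd Hx]]. exists d; split; auto.
  intros x' [_ Hx']. apply Hx. exact Hx'.
Qed.

Definition econt (g : R -> R) := forall x eps, 0 < eps -> exists del, 0 < del /\
  forall x', Rabs (x' - x) < del -> Rabs (g x' - g x) < eps.

Lemma ex_RInt_econt (g : R -> R) a b : econt g -> ex_RInt g a b.
Proof.
  intros H. apply (@ex_RInt_continuous R_CompleteNormedModule). intros z _. apply cont_R. apply H.
Qed.

Lemma econt_minus f g : econt f -> econt g -> econt (fun x => f x - g x).
Proof.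
  intros Hf Hg x eps He.
  destruct (Hf x (eps/2)) as [d1 [Hd1 H1]]; [lra|].
  destruct (Hg x (eps/2)) as [d2 [Hd2 H2]]; [lra|].
  exists (Rmin d1 d2); split; [apply Rmin_glb_lt; lra|].
  intros x' Hx'. pose proof (Rmin_l d1 d2); pose proof (Rmin_r d1 d2).
  specialize (H1 x' ltac:(lra)); specialize (H2 x' ltac:(lra)).
  replace (f x' - g x' - (f x - g x)) with ((f x' - f x) - (g x' - g x)) by ring.
  eapply Rle_lt_trans; [apply Rabs_triang|]. rewrite Rabs_Ropp. lra.
Qed.

Lemma RInt_approx (f : R -> R) a b k M :
  a <= b -> ex_RInt f a b -> (forall x, a <= x <= b -> Rabs (f x - k) <= M) ->
  Rabs (RInt f a b - (b - a) * k) <= (b - a) * M.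
Proof.
  intros Hab Hex Hb.
  assert (H1 : RInt f a b <= RInt (fun _ => k + M) a b).
  { apply RInt_le; auto. apply ex_RInt_const. intros x Hx.
    specialize (Hb x ltac:(lra)). apply Rabs_le_between in Hb. lra. }
  assert (H2 : RInt (fun _ => k - M) a b <= RInt f a b).
  { apply RInt_le; auto. apply ex_RInt_const. intros x Hx.
    specialize (Hb x ltac:(lra)). apply Rabs_le_between in Hb. lra. }
  rewrite !RInt_const in H1, H2. unfold scal in H1, H2; simpl in H1, H2.
  unfold mult in H1, H2; simpl in H1, H2.
  apply Rabs_le_between. nra.
Qed.

Lemma entire_ccont G : entire G -> ccont G.
Proof.
  intros HG z eps He. destruct (HG z) as [c Hc].
  destruct (Hc 1 Rlt_0_1) as [d [Hd H]].
  exists (Rmin d (eps / (Cmod c + 2))). split.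
  { apply Rmin_glb_lt; auto. apply Rdiv_lt_0_compat; auto. pose proof (Cmod_ge_0 c); lra. }
  intros z' Hz'. pose proof (Rmin_l d (eps / (Cmod c + 2))); pose proof (Rmin_r d (eps / (Cmod c + 2))).
  specialize (H (z' - z)%C ltac:(lra)).
  replace (z + (z' - z))%C with z' in H by (apply injective_projections; simpl; ring).
  replace (G z' - G z)%C with ((G z' - G z - c * (z' - z)) + c * (z' - z))%C
    by (apply injective_projections; simpl; ring).
  eapply Rle_lt_trans; [apply Cmod_triangle|]. rewrite Cmod_mult.
  pose proof (Cmod_ge_0 c). pose proof (Cmod_ge_0 (z' - z)%C).
  assert (Cmod (z' - z)%C * (Cmod c + 2) < eps).
  { assert (Hlt : Cmod (z' - z)%C < eps / (Cmod c + 2)) by lra.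
    apply (Rmult_lt_compat_r (Cmod c + 2)) in Hlt; [|lra].
    unfold Rdiv in Hlt. rewrite Rmult_assoc, Rinv_l in Hlt; lra. }
  nra.
Qed.


Lemma ccont_fst_x G y : ccont G -> econt (fun x => fst (G (x, y))).
Proof.
  intros HG x eps He. destruct (HG (x, y) eps He) as [d [Hd H]].
  exists d; split; auto. intros x' Hx'.
  assert (Cmod ((x', y) - (x, y))%C < d).
  { eapply Rle_lt_trans; [apply Cmod_le_abs|]. simpl.
    replace (y + - y) with 0 by ring. rewrite Rabs_R0. unfold Rminus in Hx'. lra. }
  specialize (H _ H0). eapply Rle_lt_trans; [|exact H].
  apply (abs_fst_le (G (x', y) - G (x, y))%C).
Qed.

Lemma ccont_snd_x G y : ccont G -> econt (fun x => snd (G (x, y))).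
Proof.
  intros HG x eps He. destruct (HG (x, y) eps He) as [d [Hd H]].
  exists d; split; auto. intros x' Hx'.
  assert (Cmod ((x', y) - (x, y))%C < d).
  { eapply Rle_lt_trans; [apply Cmod_le_abs|]. simpl.
    replace (y + - y) with 0 by ring. rewrite Rabs_R0. unfold Rminus in Hx'. lra. }
  specialize (H _ H0). eapply Rle_lt_trans; [|exact H].
  apply (abs_snd_le (G (x', y) - G (x, y))%C).
Qed.

Lemma ccont_fst_y G x : ccont G -> econt (fun y => fst (G (x, y))).
Proof.
  intros HG y eps He. destruct (HG (x, y) eps He) as [d [Hd H]].
  exists d; split; auto. intros y' Hy'.
  assert (Cmod ((x, y') - (x, y))%C < d).
  { eapply Rle_lt_trans; [apply Cmod_le_abs|]. simpl.
    replace (x + - x) with 0 by ring. rewrite Rabs_R0. unfold Rminus in Hy'. lra. }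
  specialize (H _ H0). eapply Rle_lt_trans; [|exact H].
  apply (abs_fst_le (G (x, y') - G (x, y))%C).
Qed.

Lemma ccont_snd_y G x : ccont G -> econt (fun y => snd (G (x, y))).
Proof.
  intros HG y eps He. destruct (HG (x, y) eps He) as [d [Hd H]].
  exists d; split; auto. intros y' Hy'.
  assert (Cmod ((x, y') - (x, y))%C < d).
  { eapply Rle_lt_trans; [apply Cmod_le_abs|]. simpl.
    replace (x + - x) with 0 by ring. rewrite Rabs_R0. unfold Rminus in Hy'. lra. }
  specialize (H _ H0). eapply Rle_lt_trans; [|exact H].
  apply (abs_snd_le (G (x, y') - G (x, y))%C).
Qed.

Record rect := mkRect { rx0 : R; rx1 : R; ry0 : R; ry1 : R }.

Section Goursat.
Variable G : Complex.C -> Complex.C.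
Hypothesis HG : entire G.

Let Gc : ccont G := entire_ccont G HG.
Let P x y := fst (G (x, y)).
Let Q x y := snd (G (x, y)).

Let exP1 y a b : ex_RInt (fun x => P x y) a b.
Proof. apply ex_RInt_econt, ccont_fst_x, Gc. Qed.

Definition I1 (r : rect) :=
  RInt (fun x => P x (ry0 r) - P x (ry1 r)) (rx0 r) (rx1 r) +
  RInt (fun y => Q (rx0 r) y - Q (rx1 r) y) (ry0 r) (ry1 r).
Definition I2 (r : rect) :=
  RInt (fun x => Q x (ry0 r) - Q x (ry1 r)) (rx0 r) (rx1 r) +
  RInt (fun y => P (rx1 r) y - P (rx0 r) y) (ry0 r) (ry1 r).
Definition NI r := Rabs (I1 r) + Rabs (I2 r).

Let exPx y0 y1 a b : ex_RInt (fun x => P x y0 - P x y1) a b.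
Proof. apply ex_RInt_econt, econt_minus; apply ccont_fst_x, Gc. Qed.
Let exQx y0 y1 a b : ex_RInt (fun x => Q x y0 - Q x y1) a b.
Proof. apply ex_RInt_econt, econt_minus; apply ccont_snd_x, Gc. Qed.
Let exPy x0 x1 a b : ex_RInt (fun y => P x0 y - P x1 y) a b.
Proof. apply ex_RInt_econt, econt_minus; apply ccont_fst_y, Gc. Qed.
Let exQy x0 x1 a b : ex_RInt (fun y => Q x0 y - Q x1 y) a b.
Proof. apply ex_RInt_econt, econt_minus; apply ccont_snd_y, Gc. Qed.

Lemma Chas (f : R -> R) a b c : ex_RInt f a b -> ex_RInt f b c ->
  RInt f a c = RInt f a b + RInt f b c.
Proof. intros. rewrite <- (RInt_Chasles f a b c); auto. Qed.

Lemma Rint_split3 (A B C : R -> R) a b :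
  ex_RInt (fun y => A y - B y) a b -> ex_RInt (fun y => B y - C y) a b ->
  RInt (fun y => A y - C y) a b = RInt (fun y => A y - B y) a b + RInt (fun y => B y - C y) a b.
Proof.
  intros H1 H2. rewrite <- (RInt_plus (V := R_CompleteNormedModule)); auto.
  apply RInt_ext. intros. unfold plus; simpl. ring.
Qed.

Definition quarter (r : rect) (i j : bool) : rect :=
  let xm := (rx0 r + rx1 r) / 2 in let ym := (ry0 r + ry1 r) / 2 in
  mkRect (if i then xm else rx0 r) (if i then rx1 r else xm)
         (if j then ym else ry0 r) (if j then ry1 r else ym).

Lemma splitx1 x0 xm x1 y0 y1 :
  I1 (mkRect x0 x1 y0 y1) = I1 (mkRect x0 xm y0 y1) + I1 (mkRect xm x1 y0 y1).
Proof.
  unfold I1; simpl. rewrite (Chas _ x0 xm x1) by auto.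
  rewrite (Rint_split3 (fun y => Q x0 y) (fun y => Q xm y) (fun y => Q x1 y)) by auto. ring.
Qed.
Lemma splitx2 x0 xm x1 y0 y1 :
  I2 (mkRect x0 x1 y0 y1) = I2 (mkRect x0 xm y0 y1) + I2 (mkRect xm x1 y0 y1).
Proof.
  unfold I2; simpl. rewrite (Chas _ x0 xm x1) by auto.
  rewrite (Rint_split3 (fun y => P x1 y) (fun y => P xm y) (fun y => P x0 y)) by auto. ring.
Qed.
Lemma splity1 x0 x1 y0 ym y1 :
  I1 (mkRect x0 x1 y0 y1) = I1 (mkRect x0 x1 y0 ym) + I1 (mkRect x0 x1 ym y1).
Proof.
  unfold I1; simpl. rewrite (Chas _ y0 ym y1) by auto.
  rewrite (Rint_split3 (fun x => P x y0) (fun x => P x ym) (fun x => P x y1)) by auto. ring.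
Qed.
Lemma splity2 x0 x1 y0 ym y1 :
  I2 (mkRect x0 x1 y0 y1) = I2 (mkRect x0 x1 y0 ym) + I2 (mkRect x0 x1 ym y1).
Proof.
  unfold I2; simpl. rewrite (Chas _ y0 ym y1) by auto.
  rewrite (Rint_split3 (fun x => Q x y0) (fun x => Q x ym) (fun x => Q x y1)) by auto. ring.
Qed.

Lemma quarter_exists r : exists i j, NI (quarter r i j) >= NI r / 4.
Proof.
  destruct r as [x0 x1 y0 y1]. unfold NI, quarter; simpl.
  set (xm := (x0 + x1) / 2). set (ym := (y0 + y1) / 2).
  rewrite (splitx1 x0 xm x1), (splitx2 x0 xm x1).
  rewrite (splity1 x0 xm y0 ym y1), (splity2 x0 xm y0 ym y1).
  rewrite (splity1 xm x1 y0 ym y1), (splity2 xm x1 y0 ym y1).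
  set (a1 := I1 (mkRect x0 xm y0 ym)). set (a2 := I1 (mkRect x0 xm ym y1)).
  set (a3 := I1 (mkRect xm x1 y0 ym)). set (a4 := I1 (mkRect xm x1 ym y1)).
  set (b1 := I2 (mkRect x0 xm y0 ym)). set (b2 := I2 (mkRect x0 xm ym y1)).
  set (b3 := I2 (mkRect xm x1 y0 ym)). set (b4 := I2 (mkRect xm x1 ym y1)).
  destruct (Rle_or_lt (Rabs (a1 + a2 + (a3 + a4)) + Rabs (b1 + b2 + (b3 + b4))) (4 * (Rabs a1 + Rabs b1))).
  { exists false, false. simpl. change (Rabs a1 + Rabs b1 >= (Rabs (a1 + a2 + (a3 + a4)) + Rabs (b1 + b2 + (b3 + b4))) / 4). lra. }
  destruct (Rle_or_lt (Rabs (a1 + a2 + (a3 + a4)) + Rabs (b1 + b2 + (b3 + b4))) (4 * (Rabs a2 + Rabs b2))).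
  { exists false, true. simpl. change (Rabs a2 + Rabs b2 >= (Rabs (a1 + a2 + (a3 + a4)) + Rabs (b1 + b2 + (b3 + b4))) / 4). lra. }
  destruct (Rle_or_lt (Rabs (a1 + a2 + (a3 + a4)) + Rabs (b1 + b2 + (b3 + b4))) (4 * (Rabs a3 + Rabs b3))).
  { exists true, false. simpl. change (Rabs a3 + Rabs b3 >= (Rabs (a1 + a2 + (a3 + a4)) + Rabs (b1 + b2 + (b3 + b4))) / 4). lra. }
  exists true, true. simpl. change (Rabs a4 + Rabs b4 >= (Rabs (a1 + a2 + (a3 + a4)) + Rabs (b1 + b2 + (b3 + b4))) / 4).
  pose proof (Rabs_triang (a1 + a2) (a3 + a4)). pose proof (Rabs_triang a1 a2). pose proof (Rabs_triang a3 a4).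
  pose proof (Rabs_triang (b1 + b2) (b3 + b4)). pose proof (Rabs_triang b1 b2). pose proof (Rabs_triang b3 b4).
  lra.
Qed.


Lemma est (r : rect) (ws c : Complex.C) (eps del : R) :
  0 <= eps ->
  (forall h, Cmod h < del -> Cmod (G (ws + h) - G ws - c * h)%C <= eps * Cmod h) ->
  rx0 r <= fst ws <= rx1 r -> ry0 r <= snd ws <= ry1 r ->
  (rx1 r - rx0 r) + (ry1 r - ry0 r) < del ->
  NI r <= 4 * eps * ((rx1 r - rx0 r) + (ry1 r - ry0 r)) ^ 2.
Proof.
  destruct r as [x0 x1 y0 y1]; destruct ws as [xs ys]; destruct c as [c1 c2]; simpl.
  intros He Hd Hx Hy HD.
  set (D := (x1 - x0) + (y1 - y0)).
  set (g1 := fst (G (xs, ys))). set (g2 := snd (G (xs, ys))).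
  assert (Hpt : forall x y, x0 <= x <= x1 -> y0 <= y <= y1 ->
    Rabs (P x y - g1 - (c1 * (x - xs) - c2 * (y - ys))) <= eps * D /\
    Rabs (Q x y - g2 - (c1 * (y - ys) + c2 * (x - xs))) <= eps * D).
  { intros x y Hx' Hy'.
    assert (Hh : Cmod ((x, y) - (xs, ys))%C <= D).
    { eapply Rle_trans; [apply Cmod_le_abs|]. simpl. unfold D.
      apply Rplus_le_compat; apply Rabs_le; lra. }
    specialize (Hd ((x, y) - (xs, ys))%C ltac:(unfold D in *; lra)).
    replace ((xs, ys) + ((x, y) - (xs, ys)))%C with (x, y) in Hd
      by (apply injective_projections; simpl; ring).
    assert (Hd' : Cmod (G (x, y) - G (xs, ys) - (c1, c2) * ((x, y) - (xs, ys)))%C <= eps * D).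
    { eapply Rle_trans; [exact Hd|]. apply Rmult_le_compat_l; auto. }
    split.
    - eapply Rle_trans; [|exact Hd']. eapply Rle_trans; [|apply abs_fst_le].
      right. f_equal; unfold P, g1; simpl; ring.
    - eapply Rle_trans; [|exact Hd']. eapply Rle_trans; [|apply abs_snd_le].
      right. f_equal; unfold Q, g2; simpl; ring. }
  assert (Hx01 : x0 <= x1) by lra. assert (Hy01 : y0 <= y1) by lra.
  assert (HDp : 0 <= D) by (unfold D; lra).
  assert (A1 := RInt_approx (fun x => P x y0 - P x y1) x0 x1 (c2 * (y1 - y0)) (2 * eps * D) Hx01 (exPx _ _ _ _)).
  assert (A2 := RInt_approx (fun y => Q x0 y - Q x1 y) y0 y1 (c2 * (x0 - x1)) (2 * eps * D) Hy01 (exQy _ _ _ _)).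
  assert (A3 := RInt_approx (fun x => Q x y0 - Q x y1) x0 x1 (c1 * (y0 - y1)) (2 * eps * D) Hx01 (exQx _ _ _ _)).
  assert (A4 := RInt_approx (fun y => P x1 y - P x0 y) y0 y1 (c1 * (x1 - x0)) (2 * eps * D) Hy01 (exPy _ _ _ _)).
  assert (T1 : Rabs (I1 (mkRect x0 x1 y0 y1)) <= 2 * eps * D * D).
  { unfold I1; simpl.
    assert (B1 : Rabs (RInt (fun x => P x y0 - P x y1) x0 x1 - (x1 - x0) * (c2 * (y1 - y0))) <= (x1 - x0) * (2 * eps * D)).
    { apply A1. intros x Hx'. destruct (Hpt x y0 Hx' ltac:(lra)) as [E1 _].
      destruct (Hpt x y1 Hx' ltac:(lra)) as [E2 _].
      replace (P x y0 - P x y1 - c2 * (y1 - y0)) with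
        ((P x y0 - g1 - (c1 * (x - xs) - c2 * (y0 - ys))) - (P x y1 - g1 - (c1 * (x - xs) - c2 * (y1 - ys)))) by ring.
      eapply Rle_trans; [apply Rabs_triang|]. rewrite Rabs_Ropp. lra. }
    assert (B2 : Rabs (RInt (fun y => Q x0 y - Q x1 y) y0 y1 - (y1 - y0) * (c2 * (x0 - x1))) <= (y1 - y0) * (2 * eps * D)).
    { apply A2. intros y Hy'. destruct (Hpt x0 y ltac:(lra) Hy') as [_ E1].
      destruct (Hpt x1 y ltac:(lra) Hy') as [_ E2].
      replace (Q x0 y - Q x1 y - c2 * (x0 - x1)) with
        ((Q x0 y - g2 - (c1 * (y - ys) + c2 * (x0 - xs))) - (Q x1 y - g2 - (c1 * (y - ys) + c2 * (x1 - xs)))) by ring.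
      eapply Rle_trans; [apply Rabs_triang|]. rewrite Rabs_Ropp. lra. }
    set (J1 := RInt (fun x => P x y0 - P x y1) x0 x1) in *.
    set (J2 := RInt (fun y => Q x0 y - Q x1 y) y0 y1) in *.
    replace (J1 + J2) with ((J1 - (x1 - x0) * (c2 * (y1 - y0))) + (J2 - (y1 - y0) * (c2 * (x0 - x1)))) by ring.
    eapply Rle_trans; [apply Rabs_triang|]. assert (HDd : D = (x1 - x0) + (y1 - y0)) by reflexivity. assert (2 * eps * D * D = (x1 - x0) * (2 * eps * D) + (y1 - y0) * (2 * eps * D)) by (unfold D; ring). lra. }
  assert (T2 : Rabs (I2 (mkRect x0 x1 y0 y1)) <= 2 * eps * D * D).
  { unfold I2; simpl.
    assert (B1 : Rabs (RInt (fun x => Q x y0 - Q x y1) x0 x1 - (x1 - x0) * (c1 * (y0 - y1))) <= (x1 - x0) * (2 * eps * D)).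
    { apply A3. intros x Hx'. destruct (Hpt x y0 Hx' ltac:(lra)) as [_ E1].
      destruct (Hpt x y1 Hx' ltac:(lra)) as [_ E2].
      replace (Q x y0 - Q x y1 - c1 * (y0 - y1)) with
        ((Q x y0 - g2 - (c1 * (y0 - ys) + c2 * (x - xs))) - (Q x y1 - g2 - (c1 * (y1 - ys) + c2 * (x - xs)))) by ring.
      eapply Rle_trans; [apply Rabs_triang|]. rewrite Rabs_Ropp. lra. }
    assert (B2 : Rabs (RInt (fun y => P x1 y - P x0 y) y0 y1 - (y1 - y0) * (c1 * (x1 - x0))) <= (y1 - y0) * (2 * eps * D)).
    { apply A4. intros y Hy'. destruct (Hpt x0 y ltac:(lra) Hy') as [E1 _].
      destruct (Hpt x1 y ltac:(lra) Hy') as [E2 _].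
      replace (P x1 y - P x0 y - c1 * (x1 - x0)) with
        ((P x1 y - g1 - (c1 * (x1 - xs) - c2 * (y - ys))) - (P x0 y - g1 - (c1 * (x0 - xs) - c2 * (y - ys)))) by ring.
      eapply Rle_trans; [apply Rabs_triang|]. rewrite Rabs_Ropp. lra. }
    set (J1 := RInt (fun x => Q x y0 - Q x y1) x0 x1) in *.
    set (J2 := RInt (fun y => P x1 y - P x0 y) y0 y1) in *.
    replace (J1 + J2) with ((J1 - (x1 - x0) * (c1 * (y0 - y1))) + (J2 - (y1 - y0) * (c1 * (x1 - x0)))) by ring.
    eapply Rle_trans; [apply Rabs_triang|]. assert (HDd : D = (x1 - x0) + (y1 - y0)) by reflexivity. assert (2 * eps * D * D = (x1 - x0) * (2 * eps * D) + (y1 - y0) * (2 * eps * D)) by (unfold D; ring). lra. }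
  unfold NI. fold D. lra.
Qed.


Definition next (r : rect) : rect :=
  epsilon (inhabits r) (fun q => exists i j, q = quarter r i j /\ NI q >= NI r / 4).

Lemma next_spec r : exists i j, next r = quarter r i j /\ NI (next r) >= NI r / 4.
Proof.
  unfold next. apply (epsilon_spec (inhabits r) (fun q => exists i j, q = quarter r i j /\ NI q >= NI r / 4)).
  destruct (quarter_exists r) as [i [j H]]. exists (quarter r i j). eauto.
Qed.

Fixpoint rs (r0 : rect) (n : nat) : rect :=
  match n with O => r0 | S k => next (rs r0 k) end.

Lemma quarter_props r i j : rx0 r <= rx1 r -> ry0 r <= ry1 r ->
  rx0 r <= rx0 (quarter r i j) /\ rx1 (quarter r i j) <= rx1 r /\
  ry0 r <= ry0 (quarter r i j) /\ ry1 (quarter r i j) <= ry1 r /\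
  rx1 (quarter r i j) - rx0 (quarter r i j) = (rx1 r - rx0 r) / 2 /\
  ry1 (quarter r i j) - ry0 (quarter r i j) = (ry1 r - ry0 r) / 2.
Proof. intros. destruct i, j; simpl; repeat split; lra. Qed.

Section Seq.
Variable r0 : rect.
Hypothesis hx : rx0 r0 <= rx1 r0.
Hypothesis hy : ry0 r0 <= ry1 r0.

Lemma rs_props n :
  (rx1 (rs r0 n) - rx0 (rs r0 n)) * 2 ^ n = rx1 r0 - rx0 r0 /\
  (ry1 (rs r0 n) - ry0 (rs r0 n)) * 2 ^ n = ry1 r0 - ry0 r0 /\
  NI r0 <= NI (rs r0 n) * (2 ^ n * 2 ^ n).
Proof.
  induction n as [|n IH]; simpl.
  - repeat split; try ring. lra.
  - destruct IH as [W1 [W2 W3]].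
    assert (P2 : 0 < 2 ^ n) by (apply pow_lt; lra).
    assert (Hx : rx0 (rs r0 n) <= rx1 (rs r0 n)).
    { destruct (Rle_or_lt (rx0 (rs r0 n)) (rx1 (rs r0 n))); auto. nra. }
    assert (Hy : ry0 (rs r0 n) <= ry1 (rs r0 n)).
    { destruct (Rle_or_lt (ry0 (rs r0 n)) (ry1 (rs r0 n))); auto. nra. }
    destruct (next_spec (rs r0 n)) as [i [j [E N]]]. rewrite E in N |- *.
    destruct (quarter_props (rs r0 n) i j Hx Hy) as [_ [_ [_ [_ [Q1 Q2]]]]].
    repeat split.
    + rewrite Q1. rewrite <- W1. field.
    + rewrite Q2. rewrite <- W2. field.
    + assert (0 <= NI (rs r0 n)) by (unfold NI; pose proof (Rabs_pos (I1 (rs r0 n))); pose proof (Rabs_pos (I2 (rs r0 n))); lra).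
      nra.
Qed.

Lemma rs_ord n : rx0 (rs r0 n) <= rx1 (rs r0 n) /\ ry0 (rs r0 n) <= ry1 (rs r0 n).
Proof.
  destruct (rs_props n) as [W1 [W2 _]].
  assert (P2 : 0 < 2 ^ n) by (apply pow_lt; lra).
  split.
  - destruct (Rle_or_lt (rx0 (rs r0 n)) (rx1 (rs r0 n))); auto. nra.
  - destruct (Rle_or_lt (ry0 (rs r0 n)) (ry1 (rs r0 n))); auto. nra.
Qed.

Lemma rs_step n :
  rx0 (rs r0 n) <= rx0 (rs r0 (S n)) /\ rx1 (rs r0 (S n)) <= rx1 (rs r0 n) /\
  ry0 (rs r0 n) <= ry0 (rs r0 (S n)) /\ ry1 (rs r0 (S n)) <= ry1 (rs r0 n).
Proof.
  destruct (rs_ord n) as [Hx Hy]. simpl.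
  destruct (next_spec (rs r0 n)) as [i [j [E _]]]. rewrite E.
  destruct (quarter_props (rs r0 n) i j Hx Hy) as [A [B [C [D _]]]]. auto.
Qed.

Lemma rs_mono n k :
  rx0 (rs r0 n) <= rx0 (rs r0 (n + k)) /\ rx1 (rs r0 (n + k)) <= rx1 (rs r0 n) /\
  ry0 (rs r0 n) <= ry0 (rs r0 (n + k)) /\ ry1 (rs r0 (n + k)) <= ry1 (rs r0 n).
Proof.
  induction k as [|k IH].
  - rewrite Nat.add_0_r. repeat split; lra.
  - rewrite Nat.add_succ_r. pose proof (rs_step (n + k)). lra.
Qed.

Lemma lo_hi m n : rx0 (rs r0 m) <= rx1 (rs r0 n) /\ ry0 (rs r0 m) <= ry1 (rs r0 n).
Proof.
  destruct (Nat.le_ge_cases m n) as [H|H].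
  - destruct (Nat.le_exists_sub m n H) as [k [Hk _]]. subst n. rewrite Nat.add_comm.
    pose proof (rs_mono m k). pose proof (rs_ord (m + k)). lra.
  - destruct (Nat.le_exists_sub n m H) as [k [Hk _]]. subst m. rewrite Nat.add_comm.
    pose proof (rs_mono n k). pose proof (rs_ord (n + k)). lra.
Qed.

Lemma limit_point : exists xs ys, forall n,
  rx0 (rs r0 n) <= xs <= rx1 (rs r0 n) /\ ry0 (rs r0 n) <= ys <= ry1 (rs r0 n).
Proof.
  destruct (completeness (fun x => exists n, x = rx0 (rs r0 n))) as [xs [Hub Hl]].
  { exists (rx1 r0). intros x [n Hn]. subst. apply (lo_hi n 0). }
  { exists (rx0 r0). exists 0%nat. reflexivity. }
  destruct (completeness (fun y => exists n, y = ry0 (rs r0 n))) as [ys [Hub' Hl']].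
  { exists (ry1 r0). intros y [n Hn]. subst. apply (lo_hi n 0). }
  { exists (ry0 r0). exists 0%nat. reflexivity. }
  exists xs, ys. intros n. repeat split.
  - apply Hub. eauto.
  - apply Hl. intros x [m Hm]. subst. apply (lo_hi m n).
  - apply Hub'. eauto.
  - apply Hl'. intros y [m Hm]. subst. apply (lo_hi m n).
Qed.

End Seq.

Lemma pow2_ge n : INR n <= 2 ^ n.
Proof.
  induction n as [|n IH]. simpl; lra.
  rewrite S_INR. simpl. assert (1 <= 2 ^ n) by (apply pow_R1_Rle; lra). lra.
Qed.

Lemma pow2_large K d : 0 < d -> exists n, K < d * 2 ^ n.
Proof.
  intros Hd. destruct (archimed_cor1 (d / (Rabs K + 1))) as [N [HN HN0]].
  { apply Rdiv_lt_0_compat; auto. pose proof (Rabs_pos K); lra. }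
  exists N. pose proof (pow2_ge N). pose proof (lt_0_INR N ltac:(lia)).
  pose proof (Rle_abs K). pose proof (Rabs_pos K).
  assert (1 < d / (Rabs K + 1) * INR N).
  { apply (Rmult_lt_compat_r (INR N)) in HN; auto. rewrite Rinv_l in HN; lra. }
  unfold Rdiv in H3. assert (d * INR N > Rabs K + 1).
  { apply (Rmult_lt_compat_r (Rabs K + 1)) in H3; [|lra].
    replace (d * / (Rabs K + 1) * INR N * (Rabs K + 1)) with (d * INR N) in H3 by (field; lra). lra. }
  nra.
Qed.

Theorem goursat (r0 : rect) : rx0 r0 <= rx1 r0 -> ry0 r0 <= ry1 r0 ->
  I1 r0 = 0 /\ I2 r0 = 0.
Proof.
  intros hx hy.
  destruct (limit_point r0 hx hy) as [xs [ys Hin]].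
  destruct (HG (xs, ys)) as [c Hc].
  set (K := (rx1 r0 - rx0 r0) + (ry1 r0 - ry0 r0)).
  assert (Hbound : forall eps, 0 < eps -> NI r0 <= 4 * eps * K ^ 2).
  { intros eps He. destruct (Hc eps He) as [del [Hdel Hd]].
    destruct (pow2_large K del Hdel) as [n Hn].
    destruct (rs_props r0 hx hy n) as [W1 [W2 W3]].
    assert (P2 : 0 < 2 ^ n) by (apply pow_lt; lra).
    assert (Hk : (rx1 (rs r0 n) - rx0 (rs r0 n)) + (ry1 (rs r0 n) - ry0 (rs r0 n)) = K / 2 ^ n).
    { unfold K. rewrite <- W1, <- W2. field. lra. }
    assert (HE := est (rs r0 n) (xs, ys) c eps del ltac:(lra) Hd (proj1 (Hin n)) (proj2 (Hin n))).
    rewrite Hk in HE.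
    assert (K / 2 ^ n < del).
    { apply (Rmult_lt_reg_r (2 ^ n)); auto. unfold Rdiv. rewrite Rmult_assoc, Rinv_l; lra. }
    specialize (HE H).
    replace (4 * eps * (K / 2 ^ n) ^ 2) with (4 * eps * K ^ 2 / (2 ^ n * 2 ^ n)) in HE by (field; lra).
    assert (0 < 2 ^ n * 2 ^ n) by nra.
    apply (Rmult_le_compat_r (2 ^ n * 2 ^ n)) in HE; [|lra].
    unfold Rdiv in HE. rewrite Rmult_assoc, Rinv_l in HE; lra. }
  assert (HN : NI r0 <= 0).
  { destruct (Rle_or_lt (NI r0) 0) as [H|H]; auto.
    assert (HK : 0 <= K ^ 2) by (apply pow2_ge_0).
    specialize (Hbound (NI r0 / (8 * K ^ 2 + 8))).
    assert (0 < NI r0 / (8 * K ^ 2 + 8)) by (apply Rdiv_lt_0_compat; lra).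
    specialize (Hbound H0).
    assert (4 * (NI r0 / (8 * K ^ 2 + 8)) * K ^ 2 < NI r0).
    { replace (4 * (NI r0 / (8 * K ^ 2 + 8)) * K ^ 2) with (NI r0 * (4 * K ^ 2 / (8 * K ^ 2 + 8))) by (field; lra).
      assert (4 * K ^ 2 / (8 * K ^ 2 + 8) < 1).
      { apply (Rmult_lt_reg_r (8 * K ^ 2 + 8)); [lra|]. unfold Rdiv. rewrite Rmult_assoc, Rinv_l; lra. }
      nra. }
    lra. }
  unfold NI in HN. pose proof (Rabs_pos (I1 r0)); pose proof (Rabs_pos (I2 r0)).
  split; apply Rabs_eq_0; lra.
Qed.

End Goursat.


Lemma cos_near (v : R) : Rabs v <= 1/2 -> Rabs (cos v - 1) <= v * v.
Proof.
  intros Hv. pose proof PI2_1.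
  destruct (cos_bound v 0 ltac:(apply Rabs_le_between in Hv; lra) ltac:(apply Rabs_le_between in Hv; lra)) as [L U].
  unfold cos_approx, cos_term in L, U. simpl in L, U.
  assert (cos v <= 1) by apply COS_bound.
  assert (1 - v * v / 2 <= cos v) by (eapply Rle_trans; [|exact L]; right; field).
  apply Rabs_le_between. split; nra.
Qed.

Lemma sin_near_pos (v : R) : 0 <= v <= 1/2 -> Rabs (sin v - v) <= v * v.
Proof.
  intros Hv. pose proof PI2_1.
  destruct (sin_bound v 0 ltac:(lra) ltac:(lra)) as [L U].
  unfold sin_approx, sin_term in L, U. simpl in L, U.
  assert (v - v*v*v/6 <= sin v) by (eapply Rle_trans; [|exact L]; right; field).
  assert (sin v <= v - v*v*v/6 + v*v*v*v*v/120) by (eapply Rle_trans; [exact U|]; right; field).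
  apply Rabs_le_between. split. nra.
  assert (v*v*v*v*v <= v * v * v) by (assert (v * v <= 1) by nra; assert (0 <= v*v*v) by (apply Rmult_le_pos; [nra|lra]); nra).
  nra.
Qed.

Lemma sin_near (v : R) : Rabs v <= 1/2 -> Rabs (sin v - v) <= v * v.
Proof.
  intros Hv. apply Rabs_le_between in Hv.
  destruct (Rle_or_lt 0 v).
  - apply sin_near_pos; lra.
  - replace (sin v - v) with (- (sin (- v) - (- v))) by (rewrite sin_neg; ring).
    rewrite Rabs_Ropp. replace (v * v) with ((- v) * (- v)) by ring. apply sin_near_pos; lra.
Qed.

Lemma exp_near (u : R) : Rabs u <= 1/2 -> Rabs (exp u - 1 - u) <= 2 * (u * u) /\ exp u <= 2.
Proof.
  intros Hu. apply Rabs_le_between in Hu.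
  pose proof (exp_ineq1_le u). pose proof (exp_ineq1_le (- u)).
  assert (HEF : exp u * exp (- u) = 1) by (rewrite <- exp_plus; replace (u + - u) with 0 by ring; apply exp_0).
  pose proof (exp_pos u).
  assert (K1 : exp u * (1 - u) <= 1) by nra.
  assert (K2 : 1 <= (1 + u + 2 * (u * u)) * (1 - u)) by nra.
  assert (K3 : exp u <= 1 + u + 2 * (u * u)) by nra.
  split.
  - apply Rabs_le_between. split; nra.
  - nra.
Qed.

Definition Cexp (w : Complex.C) : Complex.C :=
  (exp (fst w) * cos (snd w), exp (fst w) * sin (snd w)).

Lemma Cexp_add w h : Cexp (w + h)%C = (Cexp w * Cexp h)%C.
Proof.
  destruct w as [a b]; destruct h as [u v]. unfold Cexp; simpl.
  rewrite exp_plus, cos_plus, sin_plus. apply injective_projections; simpl; ring.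
Qed.

Lemma Cexp_near h : Cmod h <= 1/2 -> Cmod (Cexp h - 1 - h)%C <= 5 * (Cmod h * Cmod h).
Proof.
  intros Hh. destruct h as [u v].
  pose proof (abs_fst_le (u, v)); pose proof (abs_snd_le (u, v)). simpl in *.
  rewrite Cmod_sq. simpl.
  assert (Hu : Rabs u <= 1/2) by lra. assert (Hv : Rabs v <= 1/2) by lra.
  destruct (exp_near u Hu) as [E1 E2]. pose proof (cos_near v Hv). pose proof (sin_near v Hv).
  pose proof (exp_pos u).
  unfold Cexp; simpl.
  eapply Rle_trans; [apply Cmod_le_abs|].
  assert (R1 : Rabs (exp u * cos v + Ropp 1 + - u) <= 2 * (v * v) + 2 * (u * u)).
  { replace (exp u * cos v + Ropp 1 + - u) with (exp u * (cos v - 1) + (exp u - 1 - u)) by ring.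
    eapply Rle_trans; [apply Rabs_triang|]. rewrite Rabs_mult. rewrite (Rabs_right (exp u)) by lra.
    assert (0 <= Rabs (cos v - 1)) by apply Rabs_pos. nra. }
  assert (Heu : Rabs (exp u - 1) <= 2 * Rabs u).
  { replace (exp u - 1) with ((exp u - 1 - u) + u) by ring.
    eapply Rle_trans; [apply Rabs_triang|].
    assert (u * u <= Rabs u * (1/2)) by (rewrite <- (Rabs_mult u u) at 1 || idtac;
      assert (u * u = Rabs u * Rabs u) by (rewrite <- Rabs_mult; rewrite Rabs_right; nra);
      pose proof (Rabs_pos u); nra).
    lra. }
  assert (Hsv : Rabs (sin v) <= 2 * Rabs v).
  { replace (sin v) with ((sin v - v) + v) by ring.
    eapply Rle_trans; [apply Rabs_triang|].
    assert (v * v = Rabs v * Rabs v) by (rewrite <- Rabs_mult; rewrite Rabs_right; nra).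
    pose proof (Rabs_pos v). nra. }
  assert (R2 : Rabs (exp u * sin v + - 0 + - v) <= 2 * (u * u) + 3 * (v * v)).
  { replace (exp u * sin v + - 0 + - v) with ((exp u - 1) * sin v + (sin v - v)) by ring.
    eapply Rle_trans; [apply Rabs_triang|]. rewrite Rabs_mult.
    assert (u * u = Rabs u * Rabs u) by (rewrite <- Rabs_mult; rewrite Rabs_right; nra).
    assert (v * v = Rabs v * Rabs v) by (rewrite <- Rabs_mult; rewrite Rabs_right; nra).
    pose proof (Rabs_pos u); pose proof (Rabs_pos v); pose proof (Rabs_pos (exp u - 1)); pose proof (Rabs_pos (sin v)).
    assert (Rabs (exp u - 1) * Rabs (sin v) <= 4 * (Rabs u * Rabs v)).
    { apply Rle_trans with ((2 * Rabs u) * (2 * Rabs v)). apply Rmult_le_compat; auto. lra. }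
    assert (4*(Rabs u*Rabs v) <= 2*(u*u) + 2*(v*v)) by (pose proof (pow2_ge_0 (Rabs u - Rabs v)); nra). lra. }
  simpl. assert (0 <= u * u) by nra. lra.
Qed.

Lemma cdiff_Cexp z0 w : cdiff (fun z => (z0 + Cexp z)%C) w (Cexp w).
Proof.
  intros eps He. set (M := Cmod (Cexp w)). pose proof (Cmod_ge_0 (Cexp w)).
  exists (Rmin (1/2) (eps / (5 * M + 1))). split.
  { apply Rmin_glb_lt; [lra|]. apply Rdiv_lt_0_compat; auto. unfold M; lra. }
  intros h Hh. pose proof (Rmin_l (1/2) (eps / (5 * M + 1))); pose proof (Rmin_r (1/2) (eps / (5 * M + 1))).
  replace (z0 + Cexp (w + h) - (z0 + Cexp w) - Cexp w * h)%C with (Cexp w * (Cexp h - 1 - h))%C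
    by (rewrite Cexp_add; apply injective_projections; simpl; ring).
  rewrite Cmod_mult. fold M.
  pose proof (Cexp_near h ltac:(lra)). pose proof (Cmod_ge_0 h). pose proof (Cmod_ge_0 (Cexp h - 1 - h)%C).
  assert (Hl : Cmod h * (5 * M + 1) <= eps).
  { assert (Cmod h <= eps / (5 * M + 1)) by lra.
    apply (Rmult_le_compat_r (5 * M + 1)) in H5; [|unfold M; lra].
    unfold Rdiv in H5. rewrite Rmult_assoc, Rinv_l in H5; [lra|unfold M; lra]. }
  apply Rle_trans with (M * (5 * (Cmod h * Cmod h))).
  { apply Rmult_le_compat_l; auto. }
  unfold M in *. nra.
Qed.

Lemma cdiff_comp f g w a b : cdiff f w a -> cdiff g (f w) b -> cdiff (fun z => g (f z)) w (b * a)%C.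
Proof.
  intros Hf Hg eps He.
  set (A := Cmod a). set (B := Cmod b). pose proof (Cmod_ge_0 a). pose proof (Cmod_ge_0 b).
  fold A in H; fold B in H0.
  destruct (Hg (eps / (2 * (A + 1)))) as [d2 [Hd2 G2]].
  { apply Rdiv_lt_0_compat; lra. }
  destruct (Hf (Rmin 1 (eps / (2 * (B + 1))))) as [d1 [Hd1 G1]].
  { apply Rmin_glb_lt; [lra|]. apply Rdiv_lt_0_compat; lra. }
  exists (Rmin d1 (d2 / (A + 1))). split.
  { apply Rmin_glb_lt; auto. apply Rdiv_lt_0_compat; lra. }
  intros h Hh. pose proof (Rmin_l d1 (d2 / (A + 1))); pose proof (Rmin_r d1 (d2 / (A + 1))).
  pose proof (Rmin_l 1 (eps / (2 * (B + 1)))); pose proof (Rmin_r 1 (eps / (2 * (B + 1)))).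
  set (e1 := Rmin 1 (eps / (2 * (B + 1)))) in *.
  pose proof (Cmod_ge_0 h).
  specialize (G1 h ltac:(lra)).
  set (k := (f (w + h) - f w)%C).
  assert (Hk : Cmod k <= (A + 1) * Cmod h).
  { replace k with ((f (w + h) - f w - a * h) + a * h)%C by (unfold k; apply injective_projections; simpl; ring).
    eapply Rle_trans; [apply Cmod_triangle|]. rewrite Cmod_mult. fold A. nra. }
  assert (Hk2 : Cmod k < d2).
  { assert (Hq : Cmod h < d2 / (A + 1)) by lra.
    apply (Rmult_lt_compat_r (A + 1)) in Hq; [|lra]. unfold Rdiv in Hq.
    rewrite Rmult_assoc, Rinv_l in Hq; nra. }
  specialize (G2 k Hk2).
  replace (f w + k)%C with (f (w + h)%C) in G2 by (unfold k; apply injective_projections; simpl; ring).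
  replace (g (f (w + h)) - g (f w) - b * a * h)%C with
    ((g (f (w + h)) - g (f w) - b * k) + b * (f (w + h) - f w - a * h))%C
    by (unfold k; apply injective_projections; simpl; ring).
  eapply Rle_trans; [apply Cmod_triangle|]. rewrite Cmod_mult. fold B.
  assert (X1 : eps / (2 * (A + 1)) * Cmod k <= eps / 2 * Cmod h).
  { apply Rle_trans with (eps / (2 * (A + 1)) * ((A + 1) * Cmod h)).
    apply Rmult_le_compat_l; auto. left; apply Rdiv_lt_0_compat; lra.
    right; field; lra. }
  assert (X2 : B * Cmod (f (w + h) - f w - a * h)%C <= eps / 2 * Cmod h).
  { apply Rle_trans with (B * (e1 * Cmod h)). apply Rmult_le_compat_l; auto.
    apply Rle_trans with (B * (eps / (2 * (B + 1)) * Cmod h)).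
    apply Rmult_le_compat_l; auto. apply Rmult_le_compat_r; auto.
    assert (B / (B + 1) <= 1) by (apply (Rmult_le_reg_r (B + 1)); [lra|]; unfold Rdiv; rewrite Rmult_assoc, Rinv_l; lra).
    replace (B * (eps / (2 * (B + 1)) * Cmod h)) with (B / (B + 1) * (eps / 2 * Cmod h)) by (field; lra).
    assert (0 <= eps / 2 * Cmod h) by nra. nra. }
  lra.
Qed.


Lemma abs_sin_le x : Rabs (sin x) <= Rabs x.
Proof.
  assert (Hp : forall y, 0 <= y -> Rabs (sin y) <= y).
  { intros y Hy. destruct (Rle_or_lt y 1).
    - destruct (Req_dec y 0) as [E|E]. { subst. rewrite sin_0, Rabs_R0. lra. }
      pose proof (sin_lt_x y ltac:(lra)). pose proof PI2_1.
      assert (0 <= sin y) by (apply sin_ge_0; lra). rewrite Rabs_right; lra.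
    - pose proof (SIN_bound y). apply Rabs_le_between. lra. }
  destruct (Rle_or_lt 0 x).
  - rewrite (Rabs_right x) by lra. auto.
  - rewrite (Rabs_left x) by lra. rewrite <- (Ropp_involutive x) at 1. rewrite sin_neg, Rabs_Ropp. apply Hp; lra.
Qed.

Lemma cos_lip a b : Rabs (cos a - cos b) <= Rabs (a - b).
Proof.
  rewrite form2. rewrite !Rabs_mult. pose proof (abs_sin_le ((a - b) / 2)).
  pose proof (SIN_bound ((a + b) / 2)). assert (Rabs (sin ((a + b) / 2)) <= 1) by (apply Rabs_le_between; lra).
  replace (Rabs (-2)) with 2 by (rewrite Rabs_left; lra).
  replace (Rabs ((a - b) / 2)) with (Rabs (a - b) / 2) in H.
  2:{ unfold Rdiv. rewrite Rabs_mult. rewrite (Rabs_right (/ 2)); lra. }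
  pose proof (Rabs_pos (sin ((a - b) / 2))). pose proof (Rabs_pos (sin ((a + b) / 2))). nra.
Qed.

Lemma sin_lip a b : Rabs (sin a - sin b) <= Rabs (a - b).
Proof.
  rewrite form4. rewrite !Rabs_mult. pose proof (abs_sin_le ((a - b) / 2)).
  pose proof (COS_bound ((a + b) / 2)). assert (Rabs (cos ((a + b) / 2)) <= 1) by (apply Rabs_le_between; lra).
  replace (Rabs 2) with 2 by (rewrite Rabs_right; lra).
  replace (Rabs ((a - b) / 2)) with (Rabs (a - b) / 2) in H.
  2:{ unfold Rdiv. rewrite Rabs_mult. rewrite (Rabs_right (/ 2)); lra. }
  pose proof (Rabs_pos (sin ((a - b) / 2))). pose proof (Rabs_pos (cos ((a + b) / 2))). nra.
Qed.

Definition pol (r t : R) : Complex.C := (r * cos t, r * sin t).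

Lemma Cmod_polar r t : 0 <= r -> Cmod (pol r t) = r.
Proof.
  intros Hr. unfold Cmod, pol; simpl. pose proof (sin2_cos2 t). unfold Rsqr in H.
  replace (r * cos t * (r * cos t * 1) + r * sin t * (r * sin t * 1)) with (r * r) by nra.
  apply sqrt_square; auto.
Qed.

Lemma econt_comp (F : Complex.C -> Complex.C) (phi : R -> Complex.C) L :
  ccont F -> 0 <= L -> (forall t t', Cmod (phi t' - phi t)%C <= L * Rabs (t' - t)) ->
  econt (fun t => fst (F (phi t))).
Proof.
  intros HF HL Hphi t eps He. destruct (HF (phi t) eps He) as [d [Hd H]].
  exists (d / (L + 1)). split. apply Rdiv_lt_0_compat; lra.
  intros t' Ht'. eapply Rle_lt_trans; [apply (abs_fst_le (F (phi t') - F (phi t))%C)|].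
  apply H. eapply Rle_lt_trans; [apply Hphi|].
  pose proof (Rabs_pos (t' - t)).
  apply Rle_lt_trans with ((L + 1) * Rabs (t' - t)); [nra|].
  apply (Rmult_lt_compat_l (L + 1)) in Ht'; [|lra].
  replace ((L + 1) * (d / (L + 1))) with d in Ht' by (field; lra). lra.
Qed.

Lemma polar_lip (z0 : Complex.C) r t t' :
  Cmod ((z0 + pol r t') - (z0 + pol r t))%C <= (2 * Rabs r) * Rabs (t' - t).
Proof.
  unfold pol. eapply Rle_trans; [apply Cmod_le_abs|]. simpl.
  replace (fst z0 + r * cos t' + - (fst z0 + r * cos t)) with (r * (cos t' - cos t)) by ring.
  replace (snd z0 + r * sin t' + - (snd z0 + r * sin t)) with (r * (sin t' - sin t)) by ring.
  rewrite !Rabs_mult. pose proof (cos_lip t' t). pose proof (sin_lip t' t). pose proof (Rabs_pos r).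
  nra.
Qed.

Definition circ (F : Complex.C -> Complex.C) (z0 : Complex.C) (r t : R) : R :=
  fst (F (z0 + pol r t)%C).

Lemma circ_ex F z0 r a b : entire F -> ex_RInt (circ F z0 r) a b.
Proof.
  intros HF. apply ex_RInt_econt. unfold circ.
  apply (econt_comp F (fun t => (z0 + pol r t)%C) (2 * Rabs r)).
  apply entire_ccont; auto. pose proof (Rabs_pos r); lra.
  intros; apply polar_lip.
Qed.

Lemma entire_G F z0 : entire F -> entire (fun w => F (z0 + Cexp w)%C).
Proof.
  intros HF w. destruct (HF (z0 + Cexp w)%C) as [c Hc].
  exists (c * Cexp w)%C. apply (cdiff_comp (fun z => (z0 + Cexp z)%C) F w (Cexp w) c).
  apply cdiff_Cexp. exact Hc.
Qed.

Lemma RInt_minusR (f g : R -> R) a b : ex_RInt f a b -> ex_RInt g a b ->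
  RInt (fun x => f x - g x) a b = RInt f a b - RInt g a b.
Proof.
  intros H1 H2. rewrite <- (RInt_minus (V := R_CompleteNormedModule)); auto.
Qed.

Lemma circ_const_le F z0 r1 r2 : entire F -> 0 < r1 -> r1 <= r2 ->
  RInt (circ F z0 r1) 0 (2 * PI) = RInt (circ F z0 r2) 0 (2 * PI).
Proof.
  intros HF H1 H12.
  pose (G := fun w => F (z0 + Cexp w)%C).
  assert (HG : entire G) by apply entire_G, HF.
  assert (Hln : ln r1 <= ln r2).
  { destruct (Req_dec r1 r2) as [E|E]. subst; lra. left; apply ln_increasing; lra. }
  pose proof PI_RGT_0.
  destruct (goursat G HG (mkRect (ln r1) (ln r2) 0 (2 * PI)) Hln ltac:(simpl; lra)) as [_ E2].
  unfold I2 in E2; simpl in E2.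
  rewrite (RInt_ext (fun x => snd (G (x, 0)) - snd (G (x, 2 * PI))) (fun _ => 0)) in E2.
  2:{ intros x _. unfold G, Cexp; simpl. rewrite cos_2PI, sin_2PI, cos_0, sin_0. ring. }
  rewrite RInt_const in E2. unfold scal in E2; simpl in E2; unfold mult in E2; simpl in E2.
  assert (Ec : forall r, 0 < r -> forall y, fst (G (ln r, y)) = circ F z0 r y).
  { intros r Hr y. unfold G, circ, Cexp, pol; simpl. rewrite exp_ln; auto. }
  rewrite (RInt_ext (fun y => fst (G (ln r2, y)) - fst (G (ln r1, y)))
                    (fun y => circ F z0 r2 y - circ F z0 r1 y)) in E2.
  2:{ intros y _. rewrite !Ec by lra. reflexivity. }
  rewrite RInt_minusR in E2 by (apply circ_ex; auto). lra.
Qed.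

Lemma circ_const F z0 r1 r2 : entire F -> 0 < r1 -> 0 < r2 ->
  RInt (circ F z0 r1) 0 (2 * PI) = RInt (circ F z0 r2) 0 (2 * PI).
Proof.
  intros HF H1 H2. destruct (Rle_or_lt r1 r2).
  - apply circ_const_le; auto.
  - symmetry. apply circ_const_le; auto; lra.
Qed.

Theorem mean_value F z0 r : entire F -> 0 < r ->
  RInt (circ F z0 r) 0 (2 * PI) = 2 * PI * fst (F z0).
Proof.
  intros HF Hr. pose proof PI_RGT_0.
  assert (Hb : forall eps, 0 < eps -> Rabs (RInt (circ F z0 r) 0 (2 * PI) - 2 * PI * fst (F z0)) <= 2 * PI * eps).
  { intros eps He. destruct (entire_ccont F HF z0 eps He) as [d [Hd Hc]].
    rewrite (circ_const F z0 r (d / 2)) by (auto; lra).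
    replace (2 * PI * fst (F z0)) with ((2 * PI - 0) * fst (F z0)) by ring.
    replace (2 * PI * eps) with ((2 * PI - 0) * eps) by ring.
    apply RInt_approx. lra. apply circ_ex; auto.
    intros t _. unfold circ. left.
    eapply Rle_lt_trans; [apply (abs_fst_le (F (z0 + pol (d / 2) t) - F z0)%C)|].
    apply Hc. replace (z0 + pol (d / 2) t - z0)%C with (pol (d / 2) t)
      by (apply injective_projections; simpl; ring).
    rewrite Cmod_polar; lra. }
  set (X := RInt (circ F z0 r) 0 (2 * PI) - 2 * PI * fst (F z0)) in *.
  assert (X = 0).
  { apply Rabs_eq_0. destruct (Rle_or_lt (Rabs X) 0) as [H0|H0].
    - pose proof (Rabs_pos X); lra.
    - specialize (Hb (Rabs X / (4 * PI)) ltac:(apply Rdiv_lt_0_compat; lra)).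
      replace (2 * PI * (Rabs X / (4 * PI))) with (Rabs X / 2) in Hb by (field; lra). lra. }
  unfold X in H0. lra.
Qed.


Module EVTm.
From mathcomp Require Import all_boot all_order all_algebra.
From mathcomp Require Import all_classical all_reals all_analysis.
From mathcomp Require Import Rstruct Rstruct_topology.
Import Order.TTheory GRing.Theory Num.Theory.
Local Open Scope classical_set_scope.

Lemma EVT2 (f : R -> R -> R) (a b c d : R) : (a <= b)%coqR -> (c <= d)%coqR ->
 (forall x y eps, (0 < eps)%coqR -> exists del, (0 < del)%coqR /\ forall x' y',
    (Rabs (x'-x) < del)%coqR -> (Rabs (y'-y) < del)%coqR -> (Rabs (f x' y' - f x y) < eps)%coqR) ->
 exists x0 y0, (a <= x0 <= b)%coqR /\ (c <= y0 <= d)%coqR /\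
   forall x y, (a<=x<=b)%coqR -> (c<=y<=d)%coqR -> (f x y <= f x0 y0)%coqR.
Proof.
move=> ab cd fc.
pose g := fun p : R * R => f p.1 p.2.
pose A := `[a, b]%classic `*` `[c, d]%classic.
have A0 : A !=set0.
  exists (a, c); split => /=; rewrite in_itv /=; apply/andP; split; apply/RleP; lra.
have cA : compact A by apply: compact_setX; apply: segment_compact.
have gc : continuous g.
  move=> [x y]; apply/(@cvgrPdist_lt _ R^o) => e /RltP e0.
  have [del [/RltP del0 H]] := fc x y e e0.
  exists (ball x del, ball y del) => /=.
    by split; apply: nbhsx_ballx; exact: del0.
  move=> [x' y'] [/= bx byy].
  move: bx byy; rewrite /ball /= => /RltP bx /RltP byy.
  rewrite /g /= -RabsE; rewrite Rabs_minus_sym; apply/RltP; apply: H.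
  by rewrite Rabs_minus_sym RabsE.
  by rewrite Rabs_minus_sym RabsE.
have [[x0 y0] /set_mem [/= Hx Hy] Hm] := compact_EVT_max A0 cA (continuous_subspaceT gc).
move: Hx Hy; rewrite !in_itv /= => /andP[/RleP ? /RleP ?] /andP[/RleP ? /RleP ?].
exists x0, y0; split; [lra|split; [lra|]].
move=> x y Hx Hy; apply/RleP; apply: (Hm (x, y)); apply/mem_set; split => /=;
  rewrite in_itv /=; apply/andP; split; apply/RleP; lra.
Qed.
End EVTm.



Lemma polar_rep (z : Complex.C) : exists r t, 0 <= r /\ r = Cmod z /\ 0 <= t <= 2 * PI /\ z = pol r t.
Proof.
  destruct z as [u v]. pose proof (Cmod_sq (u, v)) as Hs. simpl in Hs.
  set (r := Cmod (u, v)) in *. pose proof (Cmod_ge_0 (u, v)). fold r in H.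
  pose proof PI_RGT_0.
  destruct (Req_dec r 0) as [E|E].
  { exists 0, 0. repeat split; try lra.
    unfold pol. rewrite E in Hs. apply injective_projections; simpl; nra. }
  assert (Hr : 0 < r) by lra.
  set (x := u / r). set (y := v / r).
  assert (Hu : u = r * x) by (unfold x; field; lra).
  assert (Hv : v = r * y) by (unfold y; field; lra).
  assert (Hxy : x * x + y * y = 1).
  { apply (Rmult_eq_reg_l (r * r)); [|nra]. rewrite Hu, Hv in Hs. nra. }
  assert (Hx : -1 <= x <= 1) by nra.
  pose proof (acos_bound x).
  destruct (Rle_or_lt 0 v).
  - exists r, (acos x). repeat split; try lra.
    unfold pol. rewrite cos_acos by auto. rewrite sin_acos by auto.
    assert (Hy : 0 <= y) by (unfold y; apply Rdiv_le_0_compat; lra).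
    replace (1 - x²) with (y * y) by (unfold Rsqr; lra). rewrite sqrt_square by auto.
    apply injective_projections; simpl; lra.
  - exists r, (2 * PI - acos x). repeat split; try lra.
    unfold pol. rewrite cos_minus, sin_minus, cos_2PI, sin_2PI.
    rewrite cos_acos by auto. rewrite sin_acos by auto.
    assert (Hy : 0 < - y) by nra.
    replace (1 - x²) with ((- y) * (- y)) by (unfold Rsqr; lra). rewrite sqrt_square by lra.
    apply injective_projections; simpl; lra.
Qed.

Lemma pol_lip2 r t r' t' : Rabs (r' - r) <= 1 ->
  Cmod (pol r' t' - pol r t)%C <= 2 * Rabs (r' - r) + 2 * Rabs r * Rabs (t' - t).
Proof.
  intros H1. unfold pol. eapply Rle_trans; [apply Cmod_le_abs|]. simpl.
  replace (r' * cos t' + - (r * cos t)) with ((r' - r) * cos t' + r * (cos t' - cos t)) by ring.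
  replace (r' * sin t' + - (r * sin t)) with ((r' - r) * sin t' + r * (sin t' - sin t)) by ring.
  pose proof (Rabs_triang ((r' - r) * cos t') (r * (cos t' - cos t))).
  pose proof (Rabs_triang ((r' - r) * sin t') (r * (sin t' - sin t))).
  rewrite !Rabs_mult in *.
  pose proof (cos_lip t' t). pose proof (sin_lip t' t).
  assert (Rabs (cos t') <= 1) by (apply Rabs_le_between; apply COS_bound).
  assert (Rabs (sin t') <= 1) by (apply Rabs_le_between; apply SIN_bound).
  pose proof (Rabs_pos (r' - r)). pose proof (Rabs_pos r). pose proof (Rabs_pos (cos t')). pose proof (Rabs_pos (sin t')).
  pose proof (Rabs_pos (cos t' - cos t)). pose proof (Rabs_pos (sin t' - sin t)).
  assert (Rabs (r' - r) * Rabs (cos t') <= Rabs (r' - r) * 1) by (apply Rmult_le_compat_l; auto).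
  assert (Rabs (r' - r) * Rabs (sin t') <= Rabs (r' - r) * 1) by (apply Rmult_le_compat_l; auto).
  assert (Rabs r * Rabs (cos t' - cos t) <= Rabs r * Rabs (t' - t)) by (apply Rmult_le_compat_l; auto).
  assert (Rabs r * Rabs (sin t' - sin t) <= Rabs r * Rabs (t' - t)) by (apply Rmult_le_compat_l; auto).
  lra.
Qed.

Lemma vcont F eps : entire F -> 0 <= eps ->
  forall r t e, 0 < e -> exists del, 0 < del /\ forall r' t',
    Rabs (r' - r) < del -> Rabs (t' - t) < del ->
    Rabs ((fst (F (pol r' t')) + eps * (r' * r')) - (fst (F (pol r t)) + eps * (r * r))) < e.
Proof.
  intros HF He r t e Hee.
  destruct (entire_ccont F HF (pol r t) (e / 2)) as [d [Hd Hc]]; [lra|].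
  pose proof (Rabs_pos r).
  set (K := 2 + 2 * Rabs r). set (L := eps * (2 * Rabs r + 1) + 1).
  assert (HK : 0 < K) by (unfold K; lra).
  assert (HL0 : 0 <= eps * (2 * Rabs r + 1)) by (apply Rmult_le_pos; lra).
  assert (HL : 0 < L) by (unfold L; lra).
  exists (Rmin 1 (Rmin (d / (K + 1)) (e / (2 * L)))). split.
  { repeat apply Rmin_glb_lt; try lra; apply Rdiv_lt_0_compat; lra. }
  intros r' t' Hr' Ht'.
  pose proof (Rmin_l 1 (Rmin (d / (K + 1)) (e / (2 * L)))).
  pose proof (Rmin_r 1 (Rmin (d / (K + 1)) (e / (2 * L)))).
  pose proof (Rmin_l (d / (K + 1)) (e / (2 * L))). pose proof (Rmin_r (d / (K + 1)) (e / (2 * L))).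
  set (m := Rmin 1 (Rmin (d / (K + 1)) (e / (2 * L)))) in *.
  pose proof (Rabs_pos (r' - r)). pose proof (Rabs_pos (t' - t)).
  assert (Hm : 0 < m) by lra.
  assert (C1 : Rabs (fst (F (pol r' t')) - fst (F (pol r t))) < e / 2).
  { eapply Rle_lt_trans; [apply (abs_fst_le (F (pol r' t') - F (pol r t))%C)|]. apply Hc.
    eapply Rle_lt_trans; [apply pol_lip2; lra|].
    assert (m * (K + 1) <= d).
    { apply Rle_trans with (d / (K + 1) * (K + 1)). apply Rmult_le_compat_r; lra.
      right; field; lra. }
    assert (m * (K + 1) = 2 * m + 2 * (Rabs r * m) + m) by (unfold K; ring).
    assert (Rabs r * Rabs (t' - t) <= Rabs r * m) by (apply Rmult_le_compat_l; lra).
    lra. }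
  assert (C2 : Rabs (eps * (r' * r') - eps * (r * r)) <= e / 2).
  { replace (eps * (r' * r') - eps * (r * r)) with (eps * ((r' - r) * (r' + r))) by ring.
    rewrite !Rabs_mult. rewrite (Rabs_right eps) by lra.
    assert (Rabs (r' + r) <= 2 * Rabs r + 1).
    { replace (r' + r) with ((r' - r) + 2 * r) by ring. eapply Rle_trans; [apply Rabs_triang|].
      rewrite Rabs_mult, (Rabs_right 2) by lra. lra. }
    assert (m * L <= e / 2).
    { apply Rle_trans with (e / (2 * L) * L). apply Rmult_le_compat_r; lra.
      right; field; lra. }
    pose proof (Rabs_pos (r' + r)).
    assert (Rabs (r' - r) * Rabs (r' + r) <= m * (2 * Rabs r + 1)) by (apply Rmult_le_compat; lra).
    apply Rle_trans with (eps * (m * (2 * Rabs r + 1))).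
    { apply Rmult_le_compat_l; auto. }
    assert (m * L = m * (eps * (2 * Rabs r + 1)) + m) by (unfold L; ring).
    assert (eps * (m * (2 * Rabs r + 1)) = m * (eps * (2 * Rabs r + 1))) by ring.
    lra. }
  replace (fst (F (pol r' t')) + eps * (r' * r') - (fst (F (pol r t)) + eps * (r * r))) with
    ((fst (F (pol r' t')) - fst (F (pol r t))) + (eps * (r' * r') - eps * (r * r))) by ring.
  eapply Rle_lt_trans; [apply Rabs_triang|]. lra.
Qed.

Lemma RInt_plusR (f g : R -> R) a b : ex_RInt f a b -> ex_RInt g a b ->
  RInt (fun x => f x + g x) a b = RInt f a b + RInt g a b.
Proof. intros H1 H2. rewrite <- (RInt_plus (V := R_CompleteNormedModule)); auto. Qed.

Lemma RInt_scalR (f : R -> R) a b c : ex_RInt f a b ->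
  RInt (fun x => c * f x) a b = c * RInt f a b.
Proof. intros H1. rewrite <- (RInt_scal (V := R_CompleteNormedModule)); auto. Qed.

Lemma RInt_constR a b k : RInt (fun _ => k) a b = (b - a) * k.
Proof. rewrite RInt_const. reflexivity. Qed.

Lemma entire_lin (u : Complex.C) : entire (fun z => (u * z)%C).
Proof.
  intros w. exists u. intros eps He. exists 1. split; [lra|]. intros h _.
  replace (u * (w + h) - u * w - u * h)%C with (RtoC 0) by (apply injective_projections; simpl; ring).
  rewrite Cmod_0. pose proof (Cmod_ge_0 h). nra.
Qed.

Lemma circ_sq a b s t : (a + s * cos t) * (a + s * cos t) + (b + s * sin t) * (b + s * sin t) =
  2 * (a * (a + s * cos t) - - b * (b + s * sin t)) - (a * a + b * b - s * s).
Proof.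
  pose proof (sin2_cos2 t) as E. unfold Rsqr in E.
  replace ((a + s * cos t) * (a + s * cos t) + (b + s * sin t) * (b + s * sin t))
    with (a * a + b * b + 2 * s * (a * cos t + b * sin t) + s * s * (sin t * sin t + cos t * cos t)) by ring.
  rewrite E. ring.
Qed.

Theorem maxp F m : entire F -> (forall t, 0 <= t <= 2 * PI -> fst (F (pol 1 t)) <= m) ->
  forall z, Cmod z <= 1 -> fst (F z) <= m.
Proof.
  intros HF Hm z0 Hz0. destruct (Rle_or_lt (fst (F z0)) m) as [Hle|Hgt]; auto. exfalso.
  pose proof PI_RGT_0.
  set (eps := (fst (F z0) - m) / 2).
  assert (He : 0 < eps) by (unfold eps; lra).
  set (f := fun r t => fst (F (pol r t)) + eps * (r * r)).
  destruct (EVTm.EVT2 f 0 1 0 (2 * PI) ltac:(lra) ltac:(lra)) as [rs [ts [Hr [Ht Hmax]]]].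
  { intros x y e Hee. unfold f. apply vcont; auto; lra. }
  assert (Hv : forall z, Cmod z <= 1 -> fst (F z) + eps * (Cmod z * Cmod z) <= f rs ts).
  { intros z Hz. destruct (polar_rep z) as [r [t [Hr0 [Hrz [Ht0 Hzp]]]]].
    pose proof (Hmax r t ltac:(lra) Ht0). unfold f in H0. rewrite <- Hzp in H0. rewrite <- Hrz. exact H0. }
  destruct (Rle_or_lt 1 rs) as [E1|E1].
  - assert (rs = 1) by lra. subst rs.
    pose proof (Hv z0 Hz0). pose proof (Hm ts Ht). unfold f in H0.
    pose proof (Cmod_ge_0 z0). assert (0 <= eps * (Cmod z0 * Cmod z0)) by (apply Rmult_le_pos; nra).
    unfold eps in *. lra.
  - set (zs := pol rs ts). set (s := (1 - rs) / 2).
    assert (Hs : 0 < s) by (unfold s; lra).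
    assert (Hzs : Cmod zs = rs) by (apply Cmod_polar; lra).
    set (xs := fst zs). set (ys := snd zs).
    set (Lf := fun z => ((xs, (- ys)%R) * z)%C).
    assert (HH : entire Lf) by apply entire_lin.
    set (K := xs * xs + ys * ys - s * s).
    set (g := fun t => circ F zs s t + eps * (2 * circ Lf zs s t - K)).
    assert (Hg : forall t, g t = fst (F (zs + pol s t)%C) + eps * (Cmod (zs + pol s t)%C * Cmod (zs + pol s t)%C)).
    { intros t. unfold g, circ. rewrite Cmod_sq. f_equal. f_equal.
      unfold Lf, K, pol, xs, ys; simpl. symmetry. apply circ_sq. }
    assert (Hgle : forall t, g t <= f rs ts).
    { intros t. rewrite Hg. apply Hv.
      eapply Rle_trans; [apply Cmod_triangle|]. rewrite Cmod_polar by lra. rewrite Hzs. unfold s; lra. }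
    assert (Hex : ex_RInt g 0 (2 * PI)).
    { unfold g. apply (ex_RInt_plus (V := R_CompleteNormedModule)). apply circ_ex; auto.
      apply (ex_RInt_scal (V := R_CompleteNormedModule)).
      apply (ex_RInt_minus (V := R_CompleteNormedModule)).
      apply (ex_RInt_scal (V := R_CompleteNormedModule)). apply circ_ex; auto.
      apply ex_RInt_const. }
    assert (I1le : RInt g 0 (2 * PI) <= RInt (fun _ => f rs ts) 0 (2 * PI)).
    { apply RInt_le. lra. exact Hex. apply ex_RInt_const. intros; apply Hgle. }
    rewrite RInt_constR in I1le.
    assert (Ig : RInt g 0 (2 * PI) = 2 * PI * fst (F zs) + eps * (2 * (2 * PI * fst (Lf zs)) - 2 * PI * K)).
    { unfold g. rewrite RInt_plusR.
      2:{ apply circ_ex; auto. }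
      2:{ apply (ex_RInt_scal (V := R_CompleteNormedModule)).
          apply (ex_RInt_minus (V := R_CompleteNormedModule)).
          apply (ex_RInt_scal (V := R_CompleteNormedModule)). apply circ_ex; auto.
          apply ex_RInt_const. }
      rewrite mean_value by auto. rewrite RInt_scalR.
      2:{ apply (ex_RInt_minus (V := R_CompleteNormedModule)).
          apply (ex_RInt_scal (V := R_CompleteNormedModule)). apply circ_ex; auto.
          apply ex_RInt_const. }
      rewrite RInt_minusR.
      2:{ apply (ex_RInt_scal (V := R_CompleteNormedModule)). apply circ_ex; auto. }
      2:{ apply ex_RInt_const. }
      rewrite RInt_scalR by (apply circ_ex; auto).
      rewrite mean_value by auto. rewrite RInt_constR. rewrite Rminus_0_r. reflexivity. }
    assert (HHzs : @eq R (fst (Lf zs)) (xs * xs + ys * ys)).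
    { unfold Lf, xs, ys, zs; simpl. ring. }
    pose proof (Cmod_sq zs) as Cs. rewrite Hzs in Cs. fold xs ys in Cs.
    rewrite Ig, HHzs in I1le. unfold f in I1le. fold zs in I1le. unfold K in I1le.
    assert (0 < 2 * PI * eps * (s * s)) by (apply Rmult_lt_0_compat; [nra|nra]).
    rewrite <- Cs in I1le.
    assert (2 * PI * fst (F zs) + eps * (2 * (2 * PI * (rs * rs)) - 2 * PI * (rs * rs - s * s)) = (2 * PI - 0) * (fst (F zs) + eps * (rs * rs)) + 2 * PI * eps * (s * s)) by ring.
    lra.
Qed.



Definition emb (z : Complex.C) : C2 := mkC2 (fst z) (snd z) 0 0.
Definition dot (x y : C2) : R := a1 x * a1 y + b1 x * b1 y + a2 x * a2 y + b2 x * b2 y.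

Lemma lagrange (E a : C2) :
  Cmod (dot E a, dot E (mulI a)) <= normC2 E * normC2 a.
Proof.
  destruct E as [e1 e2 e3 e4]; destruct a as [x1 x2 x3 x4].
  unfold Cmod, normC2, dot, mulI; simpl.
  rewrite <- sqrt_mult by nra.
  apply sqrt_le_1_alt.
  match goal with |- ?A <= ?B => assert (B - A = (e1 * x3 - e2 * x4 - e3 * x1 + e4 * x2) ^ 2 + (e1 * x4 + e2 * x3 - e3 * x2 - e4 * x1) ^ 2) by ring end.
  pose proof (pow2_ge_0 (e1 * x3 - e2 * x4 - e3 * x1 + e4 * x2)).
  pose proof (pow2_ge_0 (e1 * x4 + e2 * x3 - e3 * x2 - e4 * x1)).
  lra.
Qed.

Lemma dot_le (E a : C2) : dot E a <= normC2 E * normC2 a.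
Proof.
  eapply Rle_trans; [|apply lagrange]. eapply Rle_trans; [apply Rle_abs|].
  apply (abs_fst_le (dot E a, dot E (mulI a))).
Qed.

Definition Fz (psi : C2 -> C2) (c av : C2) (z : Complex.C) : Complex.C :=
  (dot (subC2 (psi (emb z)) c) av, dot (subC2 (psi (emb z)) c) (mulI av)).

Definition e0 : C2 := mkC2 1 0 0 0.

Lemma emb_add w h : emb (w + h)%C = addC2 (emb w) (emb h).
Proof. unfold emb, addC2; simpl. f_equal; ring. Qed.

Lemma emb_dec h : emb h = addC2 (scaleC2 (fst h) e0) (scaleC2 (snd h) (mulI e0)).
Proof. unfold emb, addC2, scaleC2, mulI, e0; simpl. f_equal; ring. Qed.

Lemma normC2_emb h : normC2 (emb h) = Cmod h.
Proof. unfold normC2, emb, Cmod; simpl. f_equal. ring. Qed.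

Lemma Fz_entire psi c av : holomorphic psi -> entire (Fz psi c av).
Proof.
  intros Hh w. destruct (Hh (emb w)) as [L [[Ladd [Lsc Lmul]] Hfr]].
  exists (dot (L e0) av, dot (L e0) (mulI av)).
  intros eps He. pose proof (normC2 av) as na.
  assert (Hna : 0 <= normC2 av) by (unfold normC2; apply sqrt_pos).
  destruct (Hfr (eps / (normC2 av + 1))) as [d [Hd Hf]].
  { apply Rdiv_lt_0_compat; lra. }
  exists d. split; auto. intros h Hh0.
  set (E := subC2 (subC2 (psi (addC2 (emb w) (emb h))) (psi (emb w))) (L (emb h))).
  assert (HL : L (emb h) = addC2 (scaleC2 (fst h) (L e0)) (scaleC2 (snd h) (mulI (L e0)))).
  { rewrite emb_dec, Ladd, !Lsc, Lmul. reflexivity. }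
  assert (Eq : (Fz psi c av (w + h) - Fz psi c av w - (dot (L e0) av, dot (L e0) (mulI av)) * h)%C
               = (dot E av, dot E (mulI av))).
  { unfold Fz. rewrite emb_add. unfold E. rewrite HL.
    destruct (psi (addC2 (emb w) (emb h))) as [p1 p2 p3 p4].
    destruct (psi (emb w)) as [q1 q2 q3 q4]. destruct (L e0) as [l1 l2 l3 l4].
    destruct c as [c1 c2 c3 c4]. destruct av as [v1 v2 v3 v4]. destruct h as [h1 h2].
    unfold dot, subC2, addC2, scaleC2, mulI; simpl. apply injective_projections; simpl; ring. }
  rewrite Eq. eapply Rle_trans; [apply lagrange|].
  pose proof (Cmod_ge_0 h).
  destruct (Req_dec (Cmod h) 0) as [Z|NZ].
  - assert (Hz : h = (0, 0)).
    { pose proof (Cmod_sq h) as Cs. rewrite Z in Cs. destruct h as [h1 h2]; simpl in Cs.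
      apply injective_projections; simpl; nra. }
    assert (E0 : E = mkC2 0 0 0 0).
    { unfold E. subst h. 
      assert (HL0 : L (emb (0, 0)) = mkC2 0 0 0 0).
      { replace (emb (0, 0)) with (scaleC2 0 e0) by (unfold emb, scaleC2, e0; simpl; f_equal; ring).
        rewrite Lsc. unfold scaleC2; simpl. f_equal; ring. }
      rewrite HL0. replace (addC2 (emb w) (emb (0, 0))) with (emb w)
        by (unfold addC2, emb; simpl; f_equal; ring).
      unfold subC2; simpl. f_equal; ring. }
    rewrite E0. replace (normC2 (mkC2 0 0 0 0)) with 0.
    rewrite Z. lra.
    transitivity (sqrt 0). symmetry; exact sqrt_0. unfold normC2; simpl; f_equal; ring.
  - assert (HE : normC2 E <= eps / (normC2 av + 1) * normC2 (emb h)).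
    { apply Hf. rewrite normC2_emb. lra. }
    rewrite normC2_emb in HE. pose proof (Cmod_ge_0 h).
    assert (normC2 E <= eps / (normC2 av + 1) * Cmod h) by exact HE.
    assert (HE0 : 0 <= normC2 E) by (unfold normC2; apply sqrt_pos).
    apply Rle_trans with (eps / (normC2 av + 1) * Cmod h * normC2 av).
    { apply Rmult_le_compat_r; auto. }
    assert (normC2 av / (normC2 av + 1) <= 1).
    { apply (Rmult_le_reg_r (normC2 av + 1)); [lra|]. unfold Rdiv. rewrite Rmult_assoc, Rinv_l; lra. }
    replace (eps / (normC2 av + 1) * Cmod h * normC2 av) with (normC2 av / (normC2 av + 1) * (eps * Cmod h)) by (field; lra).
    assert (0 <= eps * Cmod h) by nra. nra.
Qed.

Theorem mainTheorem6 :
  forall psi : C2 -> C2, is_aut psi ->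
    ~ spherically_extreme (image psi tubeU) (psi pointP).
Proof.
  intros psi [Hh _] [_ [_ [c [Rad [HR [Hin Hd]]]]]].
  set (av := subC2 (psi pointP) c).
  set (F := Fz psi c av).
  assert (HF : entire F) by (apply Fz_entire; auto).
  assert (Hna : normC2 av = Rad) by exact Hd.
  pose proof PI_RGT_0.
  assert (Hcirc : forall t, fst (F (pol 1 t)) < Rad * Rad).
  { intros t. unfold F, Fz; simpl fst.
    assert (Hu : tubeU (emb (pol 1 t))).
    { exists (mkC2 (cos t) (sin t) 0 0). split. exists t; reflexivity.
      replace (distC2 (emb (pol 1 t)) (mkC2 (cos t) (sin t) 0 0)) with 0. lra.
      transitivity (sqrt 0). symmetry; exact sqrt_0.
      unfold distC2, normC2, subC2, emb, pol; simpl; f_equal; ring. }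
    assert (Hi : image psi tubeU (psi (emb (pol 1 t)))) by (exists (emb (pol 1 t)); split; auto).
    specialize (Hin _ Hi).
    eapply Rle_lt_trans; [apply dot_le|]. rewrite Hna.
    apply Rmult_lt_compat_r; auto. }
  destruct (EVTm.EVT2 (fun r t => fst (F (pol r t)) + 0 * (r * r)) 1 1 0 (2 * PI) ltac:(lra) ltac:(lra))
    as [x0 [y0 [Hx0 [Hy0 Hmax]]]].
  { intros x y e He. apply vcont; auto; lra. }
  assert (x0 = 1) by lra. subst x0.
  set (m := fst (F (pol 1 y0)) + 0 * (1 * 1)).
  assert (Hm : forall t, 0 <= t <= 2 * PI -> fst (F (pol 1 t)) <= m).
  { intros t Ht. pose proof (Hmax 1 t ltac:(lra) Ht). unfold m. lra. }
  assert (Hp : Cmod (9/10, 0) <= 1).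
  { eapply Rle_trans; [apply Cmod_le_abs|]. rewrite Rabs_R0, Rabs_right by lra. lra. }
  pose proof (maxp F m HF Hm (9/10, 0) Hp) as Hle.
  assert (Hval : fst (F (9/10, 0)) = Rad * Rad).
  { unfold F, Fz. change (emb (9/10, 0)) with pointP. simpl fst. fold av. rewrite <- Hna.
    unfold normC2, dot. rewrite sqrt_sqrt. ring.
    destruct av; simpl. nra. }
  pose proof (Hcirc y0). unfold m in Hle. lra.
Qed.
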